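(* Let $(M_t)_{t\ge0}$ be a pure-jump Lévy process with characteristic function $E[e^{iuM_t}]=\exp\big(t\int_{-1}^1(e^{iux}-1-iux)\,\mu(dx)\big)$, where the Lévy measure $\mu$ satisfies $\operatorname{supp}(\mu)\subset[-1,1]$ and there exists $\alpha\in(0,2)$ with $\int_{-v}^vx^2\,\mu(dx)=O(v^{2-\alpha})$ as $v\downarrow0$. Let $f\in C^\infty(\mathbb R)$ satisfy $f(x)=x^2$ for $|x|\le1$, $f(x)=0$ for $|x|>2$ and $f(x)\in[0,2]$ for $1<|x|\le2$, and set $f^v(x)=v^2f(x/v)$ for $v>0$. Then for all $\beta\in(0,1/2)$, $$E\big[f^{t^\beta}(M_t)\big]=O\big(t^{1+\beta(2-\alpha)}\big)\quad\text{as }t\downarrow0.$$ *)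

(* Defs.v *)
From HB Require Import structures.
From mathcomp Require Import all_boot all_order all_algebra.
From mathcomp Require Import all_classical all_reals all_analysis.
Set Implicit Arguments. Unset Strict Implicit. Unset Printing Implicit Defensive.
Import Order.TTheory GRing.Theory Num.Theory.
Import numFieldNormedType.Exports.
Local Open Scope classical_set_scope.
Local Open Scope ring_scope.

Section Defs.
Context {R : realType}.

Definition smooth (f : R -> R) : Prop :=
  forall (n : nat) (x : R), derivable (derive1n n f) x 1.

Definition rescale (f : R -> R) (v : R) : R -> R := fun x => v ^+ 2 * f (x / v).

Definition levy_measure (mu : {measure set R -> \bar R}) : Prop :=
  mu [set 0] = 0%E /\
  (\int[mu]_(x in setT) (Num.min 1 (x ^+ 2))%:E < +oo)%E.

Definition supp_in_unit (mu : {measure set R -> \bar R}) : Prop :=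
  mu (~` `[-1, 1]) = 0%E.

(* Re and Im parts of psi(u) = \int_{-1}^{1} (e^{iux} - 1 - iux) mu(dx) *)
Definition psi_re (mu : {measure set R -> \bar R}) (u : R) : R :=
  Rintegral mu `[-1, 1] (fun x => cos (u * x) - 1).
Definition psi_im (mu : {measure set R -> \bar R}) (u : R) : R :=
  Rintegral mu `[-1, 1] (fun x => sin (u * x) - u * x).

Context {d : measure_display} {T : measurableType d} (P : probability T R).

(* E[e^{iuX}] = exp(t psi(u)), written out via real and imaginary parts:
   E[cos(uX)] + i E[sin(uX)] = e^{t Re psi(u)} (cos(t Im psi(u)) + i sin(t Im psi(u))) *)
Definition has_levy_charfun (mu : {measure set R -> \bar R}) (t : R) (X : T -> R) : Prop :=
  forall u : R,
    Rintegral P setT (fun w => cos (u * X w)) = expR (t * psi_re mu u) * cos (t * psi_im mu u) /\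
    Rintegral P setT (fun w => sin (u * X w)) = expR (t * psi_re mu u) * sin (t * psi_im mu u).

Definition levy_process (M : R -> T -> R) : Prop :=
  (forall t, 0 <= t -> measurable_fun setT (M t)) /\
  P [set w | M 0 w != 0] = 0%E /\
  (forall s t (B : set R), 0 <= s -> 0 <= t -> measurable B ->
     P [set w | M (t + s) w - M s w \in B] = P [set w | M t w \in B]) /\
  (forall (n : nat) (ts : nat -> R) (B : nat -> set R),
     0 <= ts 0%N -> (forall i, (i < n)%N -> ts i <= ts i.+1) ->
     (forall i, measurable (B i)) ->
     P (\big[setI/setT]_(i < n) [set w | M (ts i.+1) w - M (ts i) w \in B i])
     = (\prod_(i < n) P [set w | (M (ts i.+1) w - M (ts i) w)%R \in B i])%E) /\
  (exists N : set T, measurable N /\ P N = 0%E /\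
     forall w, ~ N w -> forall t, 0 <= t ->
       ((fun s => M s w) x @[x --> t^'+] --> M t w) /\
       (0 < t -> cvg ((fun s => M s w) x @[x --> t^'-]))).

End Defs.

(* Main.v *)
Require Import Defs.
From HB Require Import structures.
From mathcomp Require Import all_boot all_order all_algebra.
From mathcomp Require Import all_classical all_reals all_analysis.
From mathcomp Require Import lebesgue_measure measurable_realfun.
From mathcomp Require Import ring lra.
Set Implicit Arguments. Unset Strict Implicit. Unset Printing Implicit Defensive.
Import Order.TTheory GRing.Theory Num.Theory.
Import numFieldNormedType.Exports.
Local Open Scope classical_set_scope.
Local Open Scope ring_scope.

Section Trig.
Context {R : realType}.

Lemma sE (a b : R) : a *: b = a * b. Proof. by []. Qed.

Lemma nonneg_deriv (g dg : R -> R) : (forall x : R, is_derive x (1:R) g (dg x)) ->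
  (forall x, 0 <= x -> 0 <= dg x) -> forall y, 0 <= y -> g 0 <= g y.
Proof.
move=> hd hpos y y0.
have der x : derivable g x 1 by apply: ex_derive; exact: hd.
apply: (@ger0_derive1_ndecry R g 0) => //.
- move=> x; rewrite in_itv /= andbT => /ltW x0.
  by rewrite derive1E derive_val; apply: hpos.
- by apply: derivable_within_continuous => x _; exact: der.
Qed.

Lemma sin_le_id (y : R) : 0 <= y -> sin y <= y.
Proof.
move=> y0.
have := @nonneg_deriv (fun x => x - sin x) (fun x => 1 - cos x) _ _ y y0.
rewrite sin0 subr0 subr_ge0; apply.
- by move=> x _; rewrite subr_ge0 cos_le1.
Qed.

Lemma one_cos_le0 (y : R) : 0 <= y -> 1 - cos y <= y ^+ 2 / 2.
Proof.
move=> y0.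
have hd : forall x : R, is_derive x (1:R) (fun z => cos z - 1 + z ^+ 2 / 2) (x - sin x).
  by move=> x; apply: is_derive_eq; rewrite !sE; field.
have hp : forall x : R, 0 <= x -> 0 <= x - sin x.
  by move=> x x0; rewrite subr_ge0 sin_le_id.
have := nonneg_deriv hd hp y0.
rewrite cos0 expr0n /= mul0r subrr addr0; lra.
Qed.

Lemma one_cos_le (y : R) : 1 - cos y <= y ^+ 2 / 2.
Proof.
rewrite -cos_norm; have := one_cos_le0 (normr_ge0 y).
by rewrite real_normK ?num_real.
Qed.

Lemma id_sin_le0 (y : R) : 0 <= y -> y - sin y <= y ^+ 3 / 6.
Proof.
move=> y0.
have hd : forall x : R, is_derive x (1:R) (fun z => sin z - z + z ^+ 3 / 6) (cos x - 1 + x ^+ 2 / 2).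
  by move=> x; apply: is_derive_eq; rewrite !sE; field.
have hp : forall x : R, 0 <= x -> 0 <= cos x - 1 + x ^+ 2 / 2.
  by move=> x x0; have := one_cos_le x; lra.
have := nonneg_deriv hd hp y0.
rewrite sin0 expr0n /= mul0r subrr addr0; lra.
Qed.

Lemma cos_ub0 (y : R) : 0 <= y -> cos y <= 1 - y ^+ 2 / 2 + y ^+ 4 / 24.
Proof.
move=> y0.
have hd : forall x : R, is_derive x (1:R) (fun z => 1 - z ^+ 2 / 2 + z ^+ 4 / 24 - cos z)
  (sin x - x + x ^+ 3 / 6).
  by move=> x; apply: is_derive_eq; rewrite !sE; field.
have hp : forall x : R, 0 <= x -> 0 <= sin x - x + x ^+ 3 / 6.
  by move=> x x0; have := id_sin_le0 x0; lra.
have := nonneg_deriv hd hp y0.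
rewrite cos0 expr0n /= mul0r expr0n /= mul0r subr0 addr0 subrr; lra.
Qed.

Lemma cos_ub (y : R) : cos y <= 1 - y ^+ 2 / 2 + y ^+ 4 / 24.
Proof.
rewrite -cos_norm; have := cos_ub0 (normr_ge0 y).
have -> : `|y| ^+ 4 = y ^+ 4 by rewrite (_ : 4%N = (2 * 2)%N)// !exprM real_normK ?num_real.
by rewrite real_normK ?num_real.
Qed.

Lemma sin_id_le (y : R) : `|y| <= 1 -> `|sin y - y| <= y ^+ 2.
Proof.
move=> y1.
have key : forall z : R, 0 <= z <= 1 -> `|sin z - z| <= z ^+ 2.
  move=> z /andP[z0 z1].
  have h1 := sin_le_id z0; have h2 := id_sin_le0 z0.
  rewrite ler0_norm ?subr_le0// opprB.
  apply: (le_trans h2).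
  have : z ^+ 3 = z * z ^+ 2 by rewrite exprS.
  move=> ->; have hz2 : 0 <= z ^+ 2 by rewrite sqr_ge0.
  nra.
have [y0|y0] := leP 0 y.
  by apply: key; rewrite y0 /=; rewrite ger0_norm in y1.
have := key (- y); rewrite sinN sqrrN -opprD normrN; apply.
by rewrite oppr_ge0 (ltW y0) /= -(ltr0_norm y0).
Qed.

Lemma f_bound (f : R -> R) :
  (forall x, `|x| <= 1 -> f x = x ^+ 2) ->
  (forall x, 2 < `|x| -> f x = 0) ->
  (forall x, 1 < `|x| <= 2 -> 0 <= f x <= 2) ->
  forall y, 0 <= f y <= 6 * (1 - cos y).
Proof.
move=> f1 f2 f3 y.
have cu := cos_ub y.
have c1 := cos_le1 y.
have yn : y ^+ 2 = `|y| ^+ 2 by rewrite real_normK ?num_real.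
have y4 : y ^+ 4 = (`|y| ^+ 2) ^+ 2 by rewrite -yn -exprM.
rewrite y4 yn in cu.
have n0 := normr_ge0 y.
have [h1|h1] := leP `|y| 1.
  rewrite f1 // yn sqr_ge0 /=.
  set u := `|y| ^+ 2 in cu *.
  have u0 : 0 <= u by rewrite sqr_ge0.
  have u1 : u <= 1 by rewrite /u -(expr1n _ 2) ler_pXn2r ?nnegrE.
  nra.
have [h2|h2] := leP `|y| 2.
  have /andP[fa fb] := f3 y (introT andP (conj h1 h2)).
  rewrite fa /=; apply: (le_trans fb).
  set u := `|y| ^+ 2 in cu *.
  have u1 : 1 <= u by rewrite /u -(expr1n _ 2) ler_pXn2r ?nnegrE // ltW.
  have u4 : u <= 4.
    by rewrite /u (_ : 4 = 2 ^+ 2) ?ler_pXn2r ?nnegrE // expr2; lra.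
  nra.
rewrite f2 // lexx /=; lra.
Qed.

Lemma one_cos_min (y : R) : 1 - cos y <= 2 * Num.min 1 (y ^+ 2).
Proof.
have := one_cos_le y; have := cos_geN1 y; have := sqr_ge0 y.
rewrite /Num.min; case: ifP => _; lra.
Qed.

Lemma sin_bound (s e x : R) : 0 < e -> 1 <= s * e ->
  `|sin (s * x) - s * x| <= 2 * s * e * Num.min 1 ((s * x) ^+ 2) + 2 * s * x ^+ 2 / e.
Proof.
move=> e0 se.
have s0 : 0 < s.
  have : 0 < s * e by lra.
  by rewrite pmulr_lgt0.
have t0 : 0 <= 2 * s * x ^+ 2 / e.
  by apply: divr_ge0; [apply: mulr_ge0; [lra|exact: sqr_ge0]|exact: ltW].
have [h|h] := leP `|s * x| 1.
  have hm : Num.min 1 ((s * x) ^+ 2) = (s * x) ^+ 2.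
    apply/min_idPr; rewrite -(real_normK (num_real (s * x))).
    by rewrite -(expr1n _ 2) ler_pXn2r ?nnegrE.
  rewrite hm; have := sin_id_le h.
  have := sqr_ge0 (s * x); set q := (s * x) ^+ 2 => q0 hq.
  nra.
have hm : Num.min 1 ((s * x) ^+ 2) = 1.
  apply/min_idPl; rewrite -(real_normK (num_real (s * x))).
  by rewrite -(expr1n _ 2) ler_pXn2r ?nnegrE // ltW.
rewrite hm mulr1.
have hsin := sin_max (s * x).
have h1 : `|sin (s * x) - s * x| <= 2 * `|s * x|.
  by rewrite (le_trans (ler_normB _ _)) //; lra.
apply: (le_trans h1).
rewrite normrM (gtr0_norm s0).
have ax : `|x| <= e + x ^+ 2 / e.
  have : 0 <= (`|x| - e) ^+ 2 by rewrite sqr_ge0.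
  rewrite (_ : x ^+ 2 = `|x| ^+ 2) ?real_normK ?num_real // => hq.
  rewrite -(ler_pM2r e0) mulrDl mulfVK ?gt_eqF //.
  rewrite -(real_normK (num_real x)); have := normr_ge0 x; nra.
have : 2 * s * `|x| <= 2 * s * (e + x ^+ 2 / e) by rewrite ler_pM2l //; lra.
move=> hh; rewrite mulrA (le_trans hh) //. have -> : 2 * s * (e + x ^+ 2 / e) = 2 * s * e + 2 * s * x ^+ 2 / e by field; rewrite gt_eqF. done.
Qed.

End Trig.
Section Hb.
Context {R : realType}.

Definition mn (y : R) : R := Num.min 1 (y ^+ 2).

Lemma mn_ge0 y : 0 <= mn y.
Proof. by rewrite /mn le_min ler01 sqr_ge0. Qed.

Lemma mn_le_sq y : mn y <= y ^+ 2.
Proof. by rewrite /mn ge_min lexx orbT. Qed.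

Lemma meas_mn (D : set R) (s : R) : measurable_fun D (EFin \o (fun x => mn (s * x))).
Proof.
apply/measurable_EFinP; apply: measurable_funTS.
apply: measurable_minr; first exact: measurable_cst.
apply: measurable_funX; apply: measurable_funM; first exact: measurable_cst.
exact: measurable_id.
Qed.

Lemma meas_sq (D : set R) (s : R) : measurable_fun D (EFin \o (fun x => (s * x) ^+ 2)).
Proof.
apply/measurable_EFinP; apply: measurable_funTS.
apply: measurable_funX; apply: measurable_funM; first exact: measurable_cst.
exact: measurable_id.
Qed.


Lemma powRV (x r : R) : 0 < x -> (x ^-1) `^ r = (x `^ r)^-1.
Proof.
move=> x0; rewrite /powR invr_eq0 gt_eqF // lnV ?posrE // mulrN expRN. reflexivity.
Qed.

Lemma powR_sq (x : R) : 0 <= x -> x `^ 2 = x ^+ 2.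
Proof. by move=> x0; rewrite -powR_mulrn. Qed.

Lemma powR_split (x a : R) : 0 < x -> x ^+ 2 = x `^ a * x `^ (2 - a).
Proof.
move=> x0; rewrite -powRD; last by apply/implyP => _; rewrite gt_eqF.
by rewrite addrC subrK powR_sq // ltW.
Qed.

Lemma powR_gt1 (a : R) : 0 < a -> 1 < 2 `^ a.
Proof.
move=> a0; rewrite /powR (_ : (2:R) == 0 = false); last by apply/negbTE; rewrite pnatr_eq0.
by rewrite expR_gt1 mulr_gt0 // ln_gt0 // ltr1n.
Qed.

Lemma H_step (mu : {measure set R -> \bar R}) (s : R) : 0 < s ->
  (\int[mu]_(x in `[(-1)%R, 1%R]) (mn (s * x))%:E <=
   \int[mu]_(x in `[(- (2 / s))%R, (2 / s)%R]) ((s * x) ^+ 2)%:E +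
   \int[mu]_(x in `[(-1)%R, 1%R]) (mn (s / 2 * x)%R)%:E)%E.
Proof.
move=> s0.
set J := `[(- (2 / s))%R, (2 / s)%R]%classic : set R.
set I := `[(-1)%R, 1%R]%classic : set R.
have mJ : measurable J by exact: measurable_itv.
have mI : measurable I by exact: measurable_itv.
pose g := (EFin \o (fun x => (s * x) ^+ 2)) \_ J.
have mg : measurable_fun setT g.
  by apply/(measurable_restrictT _ mJ); exact: meas_sq.
have g0 x : (0 <= g x)%E.
  by rewrite /g /patch; case: ifP => _ //=; rewrite lee_fin sqr_ge0.
apply: (@le_trans _ _ (\int[mu]_(x in I) (g x + (mn (s / 2 * x))%:E))%E).
  apply: ge0_le_integral => //.
  - by move=> x _; rewrite lee_fin mn_ge0.
  - exact: meas_mn.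
  - apply: emeasurable_funD; first exact: measurable_funTS.
    exact: meas_mn.
  - move=> x _; rewrite /g /patch; case: ifP => xJ /=.
      apply: lee_paddr; first by rewrite lee_fin mn_ge0.
      by rewrite lee_fin mn_le_sq.
    rewrite add0e lee_fin.
    have hx : 2 / s < `|x|.
      have nJ : ~ J x by move=> Jx; move: xJ; rewrite mem_set.
      move: nJ; rewrite /J /= in_itv /= => /negP; rewrite negb_and -!ltNge => /orP[h|h].
        have q : 0 < 2 / s by rewrite divr_gt0.
        by rewrite ltr0_norm; lra.
      have q : 0 < 2 / s by rewrite divr_gt0.
      by rewrite gtr0_norm; lra.
    have h1 : Num.min 1 ((s / 2 * x) ^+ 2) = 1.
      apply/min_idPl; rewrite -(real_normK (num_real (s / 2 * x))).
      rewrite -(expr1n _ 2) ler_pXn2r ?nnegrE //.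
      rewrite normrM (gtr0_norm (divr_gt0 s0 _)) //.
      move: hx; rewrite ltr_pdivrMr // => hx.
      rewrite expr1n; nra.
    by rewrite /mn h1 ge_min lexx.
rewrite ge0_integralD //; last 3 first.
  - exact: measurable_funTS.
  - by move=> x _; rewrite lee_fin mn_ge0.
  - exact: meas_mn.
apply: leeD => //.
apply: (@le_trans _ _ (\int[mu]_(x in setT) g x)%E).
  by apply: ge0_subset_integral.
by rewrite [leRHS]integral_mkcond.
Qed.

Lemma int_sq_scale (mu : {measure set R -> \bar R}) (D : set R) (s : R) :
  measurable D ->
  (\int[mu]_(x in D) ((s * x) ^+ 2)%:E = (s ^+ 2)%:E * \int[mu]_(x in D) (x ^+ 2)%:E)%E.
Proof.
move=> mD.
under eq_integral do rewrite exprMn EFinM.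
rewrite ge0_integralZl_EFin //.
- by move=> x _; rewrite lee_fin sqr_ge0.
- by have := meas_sq (D:=D) 1; under eq_fun do rewrite mul1r.
- by rewrite sqr_ge0.
Qed.

Lemma H_bound (mu : {measure set R -> \bar R}) (alpha C delta L : R) :
  0 < alpha < 2 -> 0 < delta ->
  (forall v : R, 0 < v < delta ->
     (\int[mu]_(x in `[(- v)%R, v]) (x ^+ 2)%:E <= (C * v `^ (2 - alpha))%:E)%E) ->
  (\int[mu]_(x in `[(-1)%R, 1%R]) (x ^+ 2)%:E = L%:E)%E ->
  exists K : R, forall s : R, 0 < s ->
    (\int[mu]_(x in `[(-1)%R, 1%R]) (mn (s * x))%:E <= (K * s `^ alpha)%:E)%E.
Proof.
move=> /andP[a0 a2] d0 hC hL.
have mI : measurable (`[(-1)%R, 1%R]%classic : set R) by exact: measurable_itv.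
have L0 : 0 <= L.
  by rewrite -lee_fin -hL; apply: integral_ge0 => x _; rewrite lee_fin sqr_ge0.
set a := 2 `^ alpha.
have a1 : 1 < a by apply: powR_gt1.
set B := (2 / delta) `^ (2 - alpha).
pose K := Num.max (L * B) (4 * C / (a - 1)).
exists K.
have KLB : L * B <= K by rewrite le_max lexx.
have KC : 4 * C <= K * (a - 1).
  by rewrite -ler_pdivrMr ?subr_gt0 // le_max lexx orbT.
have base s : 0 < s -> s <= 2 / delta ->
    (\int[mu]_(x in `[(-1)%R, 1%R]) (mn (s * x))%:E <= (K * s `^ alpha)%:E)%E.
  move=> s0 sd.
  apply: (@le_trans _ _ (\int[mu]_(x in `[(-1)%R, 1%R]) ((s * x) ^+ 2)%:E)%E).
    apply: ge0_le_integral => //.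
    - by move=> x _; rewrite lee_fin mn_ge0.
    - exact: meas_mn.
    - exact: meas_sq.
    - by move=> x _; rewrite lee_fin mn_le_sq.
  rewrite int_sq_scale // hL -EFinM lee_fin.
  rewrite (powR_split alpha s0).
  have hB : s `^ (2 - alpha) <= B.
    have q : 0 < 2 / delta by rewrite divr_gt0.
    by apply: ge0_ler_powR; rewrite ?nnegrE; lra.
  have p0 := powR_ge0 s alpha.
  have q0 := powR_ge0 s (2 - alpha).
  rewrite -mulrA [K * _]mulrC; apply: ler_wpM2l => //; nra.
have ind n : forall s, 0 < s -> s <= 2 ^+ n * (2 / delta) ->
    (\int[mu]_(x in `[(-1)%R, 1%R]) (mn (s * x))%:E <= (K * s `^ alpha)%:E)%E.
  elim: n => [|n IH] s s0 sn.
    by apply: base => //; rewrite expr0 mul1r in sn.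
  have [sd|sd] := leP s (2 / delta); first exact: base.
  apply: (le_trans (H_step mu s0)).
  have v0 : 0 < 2 / s by rewrite divr_gt0.
  have vd : 2 / s < delta.
    by rewrite ltr_pdivrMr // mulrC -ltr_pdivrMr.
  rewrite int_sq_scale; last exact: measurable_itv.
  have h1 := hC _ (introT andP (conj v0 vd)).
  have h2 : (\int[mu]_(x in `[(-1)%R, 1%R]) (mn (s / 2 * x))%:E <= (K * (s / 2) `^ alpha)%:E)%E.
    apply: IH; first by rewrite divr_gt0.
    by rewrite exprS -mulrA in sn; lra.
  apply: (le_trans (leeD (lee_wpmul2l _ h1) h2)); first by rewrite lee_fin sqr_ge0.
  rewrite -EFinM -EFinD lee_fin.
  have a0' : 0 < a by lra.
  have e1 : (s / 2) `^ alpha = s `^ alpha / a.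
    by rewrite powRM ?invr_ge0 ?ltW // powRV.
  have e2 : (2 / s) `^ (2 - alpha) = 2 `^ (2 - alpha) / s `^ (2 - alpha).
    by rewrite powRM ?invr_ge0 ?ltW // powRV.
  have e3 : a * 2 `^ (2 - alpha) = 4.
    by rewrite /a -powR_split // expr2; lra.
  rewrite e1 e2 (powR_split alpha s0).
  have q0 : 0 < s `^ (2 - alpha) by apply: powR_gt0.
  have p0 := powR_ge0 s alpha.
  set p := s `^ alpha in p0 *; set q := s `^ (2 - alpha) in q0 *.
  set b := 2 `^ (2 - alpha) in e3 *.
  have -> : p * q * (C * (b / q)) + K * (p / a) = p * (C * (a * b) + K) / a.
    by field; rewrite gt_eqF //; lra.
  rewrite e3 ler_pdivrMr //.
  nra.
move=> s s0.
have q : 0 < 2 / delta by rewrite divr_gt0.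
pose N := Num.Def.archi_bound (s / (2 / delta)).
have hN : s / (2 / delta) < N%:R.
  by apply: archi_boundP; rewrite divr_ge0 // ltW.
apply: (ind N) => //.
have h2 : (N%:R : R) <= 2 ^+ N.
  rewrite -natrX ler_nat; apply: ltnW; exact: ltn_expl.
rewrite -ler_pdivrMr //; apply: (le_trans (ltW hN) h2).
Qed.

Lemma Rint_bound d (T : measurableType d) (mu : {measure set T -> \bar R})
  (D : set T) (g h : T -> R) (B : R) :
  measurable D -> measurable_fun D g -> measurable_fun D h ->
  (forall x, D x -> `|g x| <= h x) ->
  (\int[mu]_(x in D) (h x)%:E <= B%:E)%E ->
  mu.-integrable D (EFin \o g) /\ `|Rintegral mu D g| <= B.
Proof.
move=> mD mg mh gh hB.
have h0 x : D x -> 0 <= h x by move=> Dx; apply: le_trans (gh x Dx).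
have ih : mu.-integrable D (EFin \o h).
  apply/integrableP; split; first exact/measurable_EFinP.
  apply: (@le_lt_trans _ _ B%:E) => //.
  apply: le_trans hB; apply: ge0_le_integral => //.
  - apply: measurableT_comp => //; exact/measurable_EFinP.
  - exact/measurable_EFinP.
  - by move=> x Dx /=; rewrite lee_fin ger0_norm // h0.
  by rewrite ltry.
have ig : mu.-integrable D (EFin \o g).
  apply: le_integrable ih => //; first exact/measurable_EFinP.
  move=> x Dx /=; rewrite lee_fin (ger0_norm (h0 x Dx)); exact: gh.
split => //.
have fin := integrable_fin_num mD ig.
rewrite /Rintegral; move: fin => /EFin_fin_numP [r hr].
rewrite hr /= -lee_fin.
apply: (le_trans _ hB).
have -> : (`|r|)%:E = `|r%:E|%E by [].
rewrite -hr; apply: (le_trans (le_abse_integral _ mD _)).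
  exact/measurable_EFinP.
apply: ge0_le_integral => //.
- apply: measurableT_comp => //; exact/measurable_EFinP.
- exact/measurable_EFinP.
Qed.

Lemma meas_sq1 (D : set R) : measurable_fun D (EFin \o (fun x : R => x ^+ 2)).
Proof.
apply/measurable_EFinP; apply: measurable_funTS.
apply: measurable_funX; exact: measurable_id.
Qed.

Lemma meas_mn1 (D : set R) : measurable_fun D (EFin \o (fun x : R => Num.min 1 (x ^+ 2))).
Proof.
apply/measurable_EFinP; apply: measurable_funTS.
apply: measurable_minr; first exact: measurable_cst.
apply: measurable_funX; exact: measurable_id.
Qed.

Lemma meas_lin (D : set R) (s : R) : measurable_fun D (fun x : R => s * x).
Proof.
apply: measurable_funTS.
exact: (measurable_funM (measurable_cst s) (@measurable_id _ _ _)).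
Qed.

Lemma meas_cos_lin (D : set R) (s : R) : measurable_fun D (fun x : R => cos (s * x)).
Proof.
apply: measurable_funTS.
apply: (measurableT_comp (f := cos) (g := fun x => s * x)).
- exact: continuous_measurable_fun (@continuous_cos R).
- exact: meas_lin.
Qed.

Lemma meas_sin_lin (D : set R) (s : R) : measurable_fun D (fun x : R => sin (s * x)).
Proof.
apply: measurable_funTS.
apply: (measurableT_comp (f := sin) (g := fun x => s * x)).
- exact: continuous_measurable_fun (@continuous_sin R).
- exact: meas_lin.
Qed.

Lemma re_bound (mu : {measure set R -> \bar R}) (alpha K s : R) :
  (\int[mu]_(x in `[(-1)%R, 1%R]) (mn (s * x))%:E <= (K * s `^ alpha)%:E)%E ->
  psi_re mu s <= 0 /\ - psi_re mu s <= 2 * (K * s `^ alpha).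
Proof.
move=> hK.
pose I : set R := `[(-1)%R, 1%R]%classic.
have mI : measurable I by exact: measurable_itv.
have mg : measurable_fun I (fun x : R => cos (s * x) - 1).
  by apply: measurable_funB => //; exact: meas_cos_lin.
have mh : measurable_fun I (fun x : R => 2 * mn (s * x)).
  apply: measurable_funM => //; apply/measurable_EFinP; exact: meas_mn.
have [] := Rint_bound (mu := mu) (B := 2 * (K * s `^ alpha)) mI mg mh.
- move=> x _; rewrite ler0_norm; last by rewrite subr_le0 cos_le1.
  by rewrite opprB one_cos_min.
- under eq_integral do rewrite EFinM.
  rewrite ge0_integralZl_EFin //; last 2 first.
  + by move=> x _; rewrite lee_fin mn_ge0.
  + exact: meas_mn.
  by rewrite EFinM lee_pmul2l.
move=> ig hb.
have s0 : psi_re mu s <= 0.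
  apply: fine_le0.
  rewrite -(integral0 mu I); apply: le_integral => //.
    exact: integrable0.
  by move=> x _; rewrite lee_fin subr_le0 cos_le1.
split => //.
by rewrite -ler0_norm.
Qed.

Lemma im_bound (mu : {measure set R -> \bar R}) (alpha K L s : R) :
  1 <= s -> 0 < alpha < 2 ->
  (\int[mu]_(x in `[(-1)%R, 1%R]) (mn (s * x))%:E <= (K * s `^ alpha)%:E)%E ->
  (\int[mu]_(x in `[(-1)%R, 1%R]) (x ^+ 2)%:E = L%:E)%E ->
  `|psi_im mu s| <= (2 * K + 2 * L) * s `^ (1 + alpha / 2).
Proof.
move=> s1 /andP[a0 a2] hK hL.
have s0 : 0 < s by lra.
pose e := s `^ (- (alpha / 2)).
have e0 : 0 < e by apply: powR_gt0.
have pD (r q : R) : s `^ (r + q) = s `^ r * s `^ q.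
  by rewrite powRD //; apply/implyP => _; rewrite gt_eqF.
have se : s * e = s `^ (1 - alpha / 2).
  by rewrite pD powRr1 // ltW.
have se1 : 1 <= s * e.
  rewrite se -[X in X <= _](powRr0 s); apply: ler_powR => //; lra.
have sve : s / e = s `^ (1 + alpha / 2).
  by rewrite pD powRr1 ?ltW // /e powRN invrK.
pose I : set R := `[(-1)%R, 1%R]%classic.
have mI : measurable I by exact: measurable_itv.
have mg : measurable_fun I (fun x : R => sin (s * x) - s * x).
  by apply: measurable_funB; [exact: meas_sin_lin|exact: meas_lin].
have msq : measurable_fun I (fun x : R => x ^+ 2).
  by apply: measurable_funX; exact: measurable_id.
have mmn : measurable_fun I (fun x : R => mn (s * x)) by apply/measurable_EFinP; exact: meas_mn.
have mh : measurable_fun I (fun x : R => 2 * s * e * mn (s * x) + 2 * s * x ^+ 2 / e).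
  apply: measurable_funD; first by apply: measurable_funM.
  apply: measurable_funM => //; apply: measurable_funM => //.
have [] := Rint_bound (mu := mu) (B := 2 * s * e * (K * s `^ alpha) + 2 * s / e * L) mI mg mh.
- by move=> x _; apply: sin_bound.
- rewrite (eq_integral (fun x => (2 * s * e)%:E * (mn (s * x))%:E + (2 * s / e)%:E * (x ^+ 2)%:E)%E); last first.
    by move=> x _; rewrite -!EFinM -EFinD; congr (_%:E); field; rewrite gt_eqF.
  have c1 : 0 <= 2 * s * e by apply: mulr_ge0; [lra|exact: ltW].
  have c2 : 0 <= 2 * s / e by apply: divr_ge0; [lra|exact: ltW].
  rewrite ge0_integralD //; last 4 first.
  + by move=> x _; apply: mule_ge0; rewrite lee_fin // mn_ge0.
  + apply: emeasurable_funM => //; exact: meas_mn.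
  + by move=> x _; apply: mule_ge0; rewrite lee_fin // sqr_ge0.
  + by apply: emeasurable_funM => //; apply/measurable_EFinP.
  rewrite ge0_integralZl_EFin //; last 2 first.
  + by move=> x _; rewrite lee_fin mn_ge0.
  + exact: meas_mn.
  rewrite ge0_integralZl_EFin //; last 2 first.
  + by move=> x _; rewrite lee_fin sqr_ge0.
  + exact/measurable_EFinP.
  rewrite hL EFinD -EFinM; apply: leeD => //.
  rewrite [X in (_ <= X)%E]EFinM; apply: lee_wpmul2l => //; by rewrite lee_fin.
move=> _; rewrite -/(psi_im mu s) => h; apply: (le_trans h).
have E1 : s * e * s `^ alpha = s `^ (1 + alpha / 2).
  by rewrite se -pD; congr (_ `^ _); lra.
have E : 2 * s * e * (K * s `^ alpha) + 2 * s / e * L =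
    2 * K * (s * e * s `^ alpha) + 2 * L * (s / e) by field; rewrite gt_eqF.
rewrite E E1 sve.
have -> : 2 * K * s `^ (1 + alpha / 2) + 2 * L * s `^ (1 + alpha / 2) =
  (2 * K + 2 * L) * s `^ (1 + alpha / 2) by ring.
exact: lexx.
Qed.

Lemma final_ineq (t beta alpha K M0 a b : R) : 0 < t < 1 -> 0 < beta -> 2 * beta <= 1 ->
  0 < alpha < 2 -> a <= 0 ->
  - a <= 2 * (K * ((t `^ beta)^-1) `^ alpha) ->
  `|b| <= M0 * ((t `^ beta)^-1) `^ (1 + alpha / 2) ->
  6 * (t `^ beta) ^+ 2 * (1 - expR (t * a) * cos (t * b)) <=
  (12 * K + 3 * M0 ^+ 2) * t `^ (1 + beta * (2 - alpha)).
Proof.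
move=> /andP[t0 t1] b0 b2 /andP[al0 al2] a0 ha hb.
have tD r q : t `^ (r + q) = t `^ r * t `^ q.
  by rewrite powRD //; apply/implyP => _; rewrite gt_eqF.
have hu : (t `^ beta)^-1 = t `^ (- beta) by rewrite powRN.
rewrite hu -!powRrM in ha hb.
have hv : (t `^ beta) ^+ 2 = t `^ (2 * beta) by rewrite -powR_sq ?powR_ge0 // -powRrM mulrC.
rewrite hv.
set E := expR (t * a).
have E1 : E <= 1 by rewrite /E expR_le1; nra.
have E0 : 0 < E by rewrite /E expR_gt0.
have E2 : 1 - E <= - (t * a) by have := expR_ge1Dx (t * a); rewrite -/E; lra.
have c1 := one_cos_le (t * b).
have c2 := cos_le1 (t * b).
have h1 : 1 - E * cos (t * b) <= - (t * a) + (t * b) ^+ 2 / 2 by nra.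
set X := t `^ (- beta * (1 + alpha / 2)) in hb.
have X0 : 0 <= X by apply: powR_ge0.
have hb2 : b ^+ 2 <= M0 ^+ 2 * X ^+ 2.
  rewrite -exprMn -(real_normK (num_real b)).
  by rewrite ler_pXn2r ?nnegrE ?normr_ge0 // (le_trans _ hb).
have hX : X ^+ 2 = t `^ (- beta * (2 + alpha)).
  by rewrite -powR_sq // -powRrM; congr (_ `^ _); lra.
set Y := t `^ (- beta * alpha) in ha.
have V0 : 0 <= t `^ (2 * beta) by apply: powR_ge0.
have step : 6 * t `^ (2 * beta) * (1 - E * cos (t * b)) <=
    12 * K * (t `^ (2 * beta) * t * Y) + 3 * M0 ^+ 2 * (t `^ (2 * beta) * t ^+ 2 * X ^+ 2).
  have : 6 * t `^ (2 * beta) * (1 - E * cos (t * b)) <=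
      6 * t `^ (2 * beta) * (- (t * a) + (t * b) ^+ 2 / 2).
    by apply: ler_wpM2l => //; lra.
  move/le_trans; apply.
  have tb : (t * b) ^+ 2 <= t ^+ 2 * (M0 ^+ 2 * X ^+ 2).
    by rewrite exprMn ler_wpM2l // sqr_ge0.
  have ta : - (t * a) <= t * (2 * (K * Y)) by rewrite -mulrN ler_wpM2l // ltW.
  have : - (t * a) + (t * b) ^+ 2 / 2 <= t * (2 * (K * Y)) + t ^+ 2 * (M0 ^+ 2 * X ^+ 2) / 2.
    by lra.
  move=> h; apply: (le_trans (ler_wpM2l _ h)); first by apply: mulr_ge0 => //; lra.
  lra.
apply: (le_trans step).
have e1 : t `^ (2 * beta) * t * Y = t `^ (1 + beta * (2 - alpha)).
  rewrite -{2}(powRr1 (ltW t0)) /Y -!tD; congr (_ `^ _); ring.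
have e2 : t `^ (2 * beta) * t ^+ 2 * X ^+ 2 = t `^ (2 - alpha * beta).
  rewrite hX -powR_sq ?ltW // -!tD; congr (_ `^ _); ring.
rewrite e1 e2.
have hT : t `^ (2 - alpha * beta) <= t `^ (1 + beta * (2 - alpha)).
  apply: ger_powR; first by rewrite t0 ltW.
  nra.
have := sqr_ge0 M0; nra.
Qed.
End Hb.

Unset Implicit Arguments.

Theorem proposition4p3 (R : realType) (d : measure_display) (T : measurableType d)
  (P : probability T R) (mu : {measure set R -> \bar R}) (M : R -> T -> R)
  (alpha : R) (f : R -> R) :
  levy_measure mu ->
  supp_in_unit mu ->
  0 < alpha < 2 ->
  (exists C delta : R, 0 < delta /\ forall v : R, 0 < v < delta ->
     (\int[mu]_(x in `[(- v)%R, v]) (x ^+ 2)%:E <= (C * v `^ (2 - alpha))%:E)%E) ->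
  levy_process P M ->
  (forall t, 0 <= t -> has_levy_charfun P mu t (M t)) ->
  smooth f ->
  (forall x, `|x| <= 1 -> f x = x ^+ 2) ->
  (forall x, 2 < `|x| -> f x = 0) ->
  (forall x, 1 < `|x| <= 2 -> 0 <= f x <= 2) ->
  forall beta : R, 0 < beta < 1 / 2 ->
  exists C delta : R, 0 < delta /\ forall t : R, 0 < t < delta ->
    (`| \int[P]_(w in setT) (rescale f (t `^ beta) (M t w))%:E |
       <= (C * t `^ (1 + beta * (2 - alpha)))%:E)%E.
Proof.
move=> hlevy hsupp /andP[al0 al2] [C [delta [d0 hC]]] hproc hchar hsm f1 f2 f3 beta /andP[be0 be2].
have mI : measurable (`[(-1)%R, 1%R]%classic : set R) by exact: measurable_itv.
have msq : measurable_fun (`[(-1)%R, 1%R]%classic : set R) (EFin \o (fun x : R => x ^+ 2)).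
  exact: meas_sq1.
have hfin : (\int[mu]_(x in `[(-1)%R, 1%R]) (x ^+ 2)%:E < +oo)%E.
  apply: le_lt_trans hlevy.2.
  apply: (@le_trans _ _ (\int[mu]_(x in `[(-1)%R, 1%R]) (Num.min 1 (x ^+ 2))%:E)%E).
    apply: ge0_le_integral => //.
    - by move=> x _; rewrite lee_fin sqr_ge0.
    - exact: meas_mn1.
    - move=> x; rewrite /= in_itv /= => /andP[x1 x2]; rewrite lee_fin.
      have : x ^+ 2 <= 1 by nra.
      by move/min_idPr => ->.
  apply: ge0_subset_integral => //; first exact: meas_mn1.
  by move=> x _; rewrite lee_fin le_min ler01 sqr_ge0.
have [L hL] : exists L : R, (\int[mu]_(x in `[(-1)%R, 1%R]) (x ^+ 2)%:E = L%:E)%E.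
  exists (fine (\int[mu]_(x in `[(-1)%R, 1%R]) (x ^+ 2)%:E)%E).
  rewrite fineK // ge0_fin_numE // integral_ge0 // => x _.
  by rewrite lee_fin sqr_ge0.
have [K hK] := H_bound (introT andP (conj al0 al2)) d0 hC hL.
pose M0 := 2 * K + 2 * L.
exists (12 * K + 3 * M0 ^+ 2), 1; split => // t /andP[t0 t1].
set v := t `^ beta.
have v0 : 0 < v by apply: powR_gt0.
have v1 : v <= 1.
  rewrite /v -(powRr0 t); apply: ger_powR; [by rewrite t0 ltW|exact: ltW].
set u := v^-1.
have u1 : 1 <= u by rewrite /u invf_ge1.
have u0 : 0 < u by lra.
have [a0 ha] := re_bound (hK u u0).
have hb := im_bound u1 (introT andP (conj al0 al2)) (hK u u0) hL.
have fin := final_ineq (introT andP (conj t0 t1)) be0 (ltac:(lra) : 2 * beta <= 1)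
   (introT andP (conj al0 al2)) a0 ha hb.
rewrite -/v -/M0 in fin.
have mMt : measurable_fun setT (M t) := hproc.1 t (ltW t0).
have [hc _] := hchar t (ltW t0) u.
have cf : continuous f.
  move=> x; apply/differentiable_continuous/derivable1_diffP; exact: (hsm 0%N x).
have mf : measurable_fun setT f := continuous_measurable_fun cf.
have mg : measurable_fun setT (fun w => rescale f v (M t w)).
  rewrite /rescale; apply: measurable_funM => //.
  apply: (measurableT_comp (f := f) (g := fun w => M t w / v)) => //.
  exact: (measurable_funM mMt (measurable_cst _)).
have mc : measurable_fun setT (fun w => cos (u * M t w)).
  apply: (measurableT_comp (f := cos) (g := fun w => u * M t w)).
  - exact: continuous_measurable_fun (@continuous_cos R).
  - exact: (measurable_funM (measurable_cst _) mMt).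
have g0 w : 0 <= rescale f v (M t w).
  by rewrite /rescale; apply: mulr_ge0; [exact: sqr_ge0|case/andP: (f_bound f1 f2 f3 (M t w / v))].
have gle w : rescale f v (M t w) <= 6 * v ^+ 2 * (1 - cos (u * M t w)).
  rewrite /rescale /u [v^-1 * _]mulrC.
  case/andP: (f_bound f1 f2 f3 (M t w / v)) => _ h.
  have := sqr_ge0 v; nra.
have i1 : (\int[P]_(w in setT) (cst 1%E) w = 1)%E.
  by rewrite integral_cst // mul1e; apply: probability_setT.
have [icos _] := Rint_bound (mu := P) (B := 1) measurableT mc (measurable_cst (1:R))
  (fun w _ => cos_max _) (ltac:(change (\int[P]_(w in setT) (cst 1%E) w <= 1%:E)%E; by rewrite i1)).
set c := Rintegral P setT (fun w => cos (u * M t w)).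
have ic : (\int[P]_(w in setT) (cos (u * M t w))%:E = c%:E)%E.
  by rewrite /c /Rintegral fineK // integrable_fin_num.
have i1' : (\int[P]_(w in setT) (1 - cos (u * M t w))%:E = (1 - c)%:E)%E.
  under eq_integral do rewrite EFinB.
  rewrite (integralB_EFin (f1 := cst 1)) //; last first.
    exact: finite_measure_integrable_cst.
  by rewrite ic i1 EFinB.
rewrite gee0_abs; last by apply: integral_ge0 => w _; rewrite lee_fin g0.
apply: (@le_trans _ _ (\int[P]_(w in setT) (6 * v ^+ 2 * (1 - cos (u * M t w)))%:E)%E).
  apply: ge0_le_integral => //.
  - by move=> w _; rewrite lee_fin g0.
  - exact/measurable_EFinP.
  - apply/measurable_EFinP; apply: measurable_funM => //.
    exact: measurable_funB.
  - by move=> w _; rewrite lee_fin gle.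
under eq_integral do rewrite EFinM.
rewrite ge0_integralZl_EFin //; last 2 first.
- by apply/measurable_EFinP; exact: measurable_funB.
- by apply: mulr_ge0 => //; exact: sqr_ge0.
rewrite i1' -EFinM lee_fin /c hc.
exact: fin.
Qed.
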